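(* Consider DEAREST (described in the context) run with any stepsize $\eta>0$ and any other parameters, and assume the individual functions are $L$-average smooth and $W$ satisfies the gossip assumption (both in the context). Then for every $t$, $$f(\bar x_{t+1})\le f(\bar x_t)-\frac{\eta}{2}\|\nabla f(\bar x_t)\|^2+\eta U_t+\frac{L^2\eta}{m}C_t-\Big(\frac{1}{2\eta}-\frac L2\Big)\|\bar x_{t+1}-\bar x_t\|^2,$$ where $U_t=\big\|\frac1m\sum_{i=1}^m(\mathbf{g}_t(i)-\nabla f_i(\mathbf{x}_t(i)))\big\|^2$ and $C_t=\|\mathbf{x}_t-\mathbf{1}\bar x_t\|^2+\eta^2\|\mathbf{s}_t-\mathbf{1}\bar s_t\|^2$.
   Context: Let $f_{i,j}:\mathbb{R}^d\to\mathbb{R}$ ($i\le m$, $j\le n$) be differentiable, $f_i=\frac1n\sum_j f_{i,j}$, $f=\frac1m\sum_i f_i$. $L$-average smoothness: for some $L>0$ and every $i$, $\frac1n\sum_{j=1}^n\|\nabla f_{i,j}(x)-\nabla f_{i,j}(x')\|^2\le L^2\|x-x'\|^2$ for all $x,x'$. Gossip assumption: $W\in\mathbb{R}^{m\times m}$ symmetric, $w_{ij}=0$ if agents $i,j$ are not connected, $W\mathbf{1}=\mathbf{1}$; $\lambda_2(W)$ its second-largest eigenvalue. $\|\cdot\|$ is the Frobenius/Euclidean norm. For $\mathbf{x}\in\mathbb{R}^{m\times d}$ with rows $\mathbf{x}(i)^\top$, $\bar x=\frac1m\mathbf{1}^\top\mathbf{x}$; $\nabla\mathbf{f}(\mathbf{x})$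 has rows $\nabla f_i(\mathbf{x}(i))^\top$. FastMix$(\mathbf{u}^{(0)},K)$: $\mathbf{u}^{(-1)}=\mathbf{u}^{(0)}$, $\eta_u=\frac{1-\sqrt{1-\lambda_2^2(W)}}{1+\sqrt{1-\lambda_2^2(W)}}$; for $k=0,\dots,K$: $\mathbf{u}^{(k+1)}=(1+\eta_u)W\mathbf{u}^{(k)}-\eta_u\mathbf{u}^{(k-1)}$; output $\mathbf{u}^{(K)}$. DEAREST (parameters $\bar x_0,\eta,p,b,K_{\rm in},K,\hat K,T$): $\mathbf{x}_0=\mathbf{1}\bar x_0^\top$, $\mathbf{g}_0=\nabla\mathbf{f}(\mathbf{x}_0)$, $\mathbf{s}_0=$FastMix$(\mathbf{g}_0,K_{\rm in})$. For $t=0,\dots,T-1$: $y_t\sim$Bernoulli$(p)$ shared by all agents; $K_t=K$ if $y_t=1$, else $\hat K$; $\mathbf{x}_{t+1}=$FastMix$(\mathbf{x}_t-\eta\mathbf{s}_t,K_t)$; for each $i$, $\mathbf{g}_{t+1}(i)=\nabla f_i(\mathbf{x}_{t+1}(i))$ if $y_t=1$, else $\mathbf{g}_t(i)+\frac1b\sum_{j=1}^b(\nabla f_{i,\xi_j}(\mathbf{x}_{t+1}(i))-\nabla f_{i,\xi_j}(\mathbf{x}_t(i)))$ with $\xi_j$ i.i.d. uniform on $\{1,\dots,n\}$; $\mathbf{s}_{t+1}=$FastMix$(\mathbf{s}_t+\mathbf{g}_{t+1}-\mathbf{g}_t,K_t)$. *)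

(* Defs.v *)
From HB Require Import structures.
From mathcomp Require Import all_boot all_order all_algebra.
From mathcomp Require Import all_classical all_reals all_analysis.
Set Implicit Arguments. Unset Strict Implicit. Unset Printing Implicit Defensive.
Import Order.TTheory GRing.Theory Num.Theory.
Import numFieldNormedType.Exports.
Local Open Scope ring_scope.

Section Dearest.
Variable R : realType.

Definition dotv (d : nat) (u v : 'rV[R]_d) : R := \sum_(k < d) u 0 k * v 0 k.

Definition sqnorm (p q : nat) (A : 'M[R]_(p, q)) : R :=
  \sum_(i < p) \sum_(j < q) A i j ^+ 2.

Definition is_gradient (d : nat) (f : 'rV[R]_d -> R) (g : 'rV[R]_d -> 'rV[R]_d) :=
  forall x : 'rV[R]_d, differentiable f x /\ forall v, 'd f x v = dotv (g x) v.

Definition f_loc (m n d : nat) (fij : 'I_m -> 'I_n -> 'rV[R]_d -> R) (i : 'I_m)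
  (x : 'rV[R]_d) : R := n%:R^-1 * \sum_(j < n) fij i j x.
Definition f_glob (m n d : nat) (fij : 'I_m -> 'I_n -> 'rV[R]_d -> R)
  (x : 'rV[R]_d) : R := m%:R^-1 * \sum_(i < m) f_loc fij i x.

Definition avg_smooth (m n d : nat) (L : R)
  (gij : 'I_m -> 'I_n -> 'rV[R]_d -> 'rV[R]_d) :=
  forall (i : 'I_m) (x x' : 'rV[R]_d),
    n%:R^-1 * \sum_(j < n) sqnorm (gij i j x - gij i j x') <= L ^+ 2 * sqnorm (x - x').

(* the second-largest eigenvalue (counted with multiplicity) of W:
   the eigenvalues, listed in non-increasing order, are the roots (with
   multiplicity) of the characteristic polynomial of W *)
Definition is_lambda2 (m : nat) (W : 'M[R]_m) (l : R) :=
  exists s : seq R, [/\ size s = m, sorted (fun a b => b <= a) s,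
     char_poly W = \prod_(a <- s) ('X - a%:P) & l = s`_1].

Definition gossip (m : nat) (adj : rel 'I_m) (W : 'M[R]_m) :=
  [/\ W^T = W, (forall i j, ~~ adj i j -> W i j = 0)
    & W *m const_mx 1 = const_mx 1 :> 'cV[R]_m].

Definition mean (m d : nat) (x : 'M[R]_(m, d)) : 'rV[R]_d :=
  m%:R^-1 *: \sum_(i < m) row i x.
Definition ones_row (m d : nat) (v : 'rV[R]_d) : 'M[R]_(m, d) :=
  const_mx 1 *m v.

(* FastMix: pair (u^(k), u^(k-1)) *)
Fixpoint fastmix_pair (m d : nat) (W : 'M[R]_m) (eta_u : R) (u : 'M[R]_(m, d))
  (k : nat) : 'M[R]_(m, d) * 'M[R]_(m, d) :=
  match k with
  | 0 => (u, u)
  | k'.+1 => let p := fastmix_pair W eta_u u k' in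
             ((1 + eta_u) *: (W *m p.1) - eta_u *: p.2, p.1)
  end.
Definition eta_u_of (l2 : R) : R :=
  (1 - Num.sqrt (1 - l2 ^+ 2)) / (1 + Num.sqrt (1 - l2 ^+ 2)).
Definition FastMix (m d : nat) (W : 'M[R]_m) (l2 : R) (u : 'M[R]_(m, d)) (K : nat)
  : 'M[R]_(m, d) := (fastmix_pair W (eta_u_of l2) u K).1.

Definition grad_stack (m d : nat) (gi : 'I_m -> 'rV[R]_d -> 'rV[R]_d)
  (x : 'M[R]_(m, d)) : 'M[R]_(m, d) := \matrix_(i, k) gi i (row i x) 0 k.

(* DEAREST state (x_t, g_t, s_t) along a realization:
   y t = y_t (shared Bernoulli coin), xi t i j = j-th sample index of agent i
   at iteration t. *)
Fixpoint dearest (m n d b : nat) (W : 'M[R]_m) (l2 : R)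
  (gij : 'I_m -> 'I_n -> 'rV[R]_d -> 'rV[R]_d) (gi : 'I_m -> 'rV[R]_d -> 'rV[R]_d)
  (xbar0 : 'rV[R]_d) (eta : R) (Kin K Khat : nat)
  (y : nat -> bool) (xi : nat -> 'I_m -> 'I_b -> 'I_n) (t : nat)
  : 'M[R]_(m, d) * 'M[R]_(m, d) * 'M[R]_(m, d) :=
  match t with
  | 0 => let x0 := ones_row m xbar0 in
         let g0 := grad_stack gi x0 in
         (x0, g0, FastMix W l2 g0 Kin)
  | t'.+1 =>
    let: (xt, gt, st) := dearest W l2 gij gi xbar0 eta Kin K Khat y xi t' in
    let Kt := if y t' then K else Khat in
    let xn := FastMix W l2 (xt - eta *: st) Kt in
    let gn := if y t' then grad_stack gi xn
              else gt + \matrix_(i, k)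
                   (b%:R^-1 * \sum_(j < b)
                      (gij i (xi t' i j) (row i xn) - gij i (xi t' i j) (row i xt)) 0 k) in
    let sn := FastMix W l2 (st + gn - gt) Kt in
    (xn, gn, sn)
  end.

End Dearest.

(* Main.v *)
Require Import Defs.
From HB Require Import structures.
From mathcomp Require Import all_boot all_order all_algebra.
From mathcomp Require Import all_classical all_reals all_analysis.
From mathcomp Require Import ring lra.
Import Order.TTheory GRing.Theory Num.Theory.
Import numFieldNormedType.Exports.
Set Implicit Arguments. Unset Strict Implicit. Unset Printing Implicit Defensive.
Local Open Scope ring_scope.

Section Aux.
Variable R : realType.
Implicit Types (d : nat).

Lemma dotvC d (u v : 'rV[R]_d) : dotv u v = dotv v u.
Proof. by apply: eq_bigr => k _; rewrite mulrC. Qed.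

Lemma dotvDl d (u w v : 'rV[R]_d) : dotv (u + w) v = dotv u v + dotv w v.
Proof. by rewrite /dotv -big_split; apply: eq_bigr => k _; rewrite mxE mulrDl. Qed.

Lemma dotvZl d c (u v : 'rV[R]_d) : dotv (c *: u) v = c * dotv u v.
Proof. by rewrite /dotv mulr_sumr; apply: eq_bigr => k _; rewrite mxE mulrA. Qed.

Lemma dotvNl d (u v : 'rV[R]_d) : dotv (- u) v = - dotv u v.
Proof. by rewrite -scaleN1r dotvZl mulN1r. Qed.

Lemma dotvBl d (u w v : 'rV[R]_d) : dotv (u - w) v = dotv u v - dotv w v.
Proof. by rewrite dotvDl dotvNl. Qed.

Lemma dotvDr d (u w v : 'rV[R]_d) : dotv v (u + w) = dotv v u + dotv v w.
Proof. by rewrite !(dotvC v) dotvDl. Qed.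

Lemma dotvZr d c (u v : 'rV[R]_d) : dotv v (c *: u) = c * dotv v u.
Proof. by rewrite !(dotvC v) dotvZl. Qed.

Lemma dotvBr d (u w v : 'rV[R]_d) : dotv v (u - w) = dotv v u - dotv v w.
Proof. by rewrite !(dotvC v) dotvBl. Qed.

Lemma dotv_suml d k (a : 'I_k -> 'rV[R]_d) v :
  dotv (\sum_(i < k) a i) v = \sum_(i < k) dotv (a i) v.
Proof.
rewrite /dotv exchange_big /=; apply: eq_bigr => j _.
by rewrite summxE mulr_suml.
Qed.

Lemma sqnormE d (u : 'rV[R]_d) : sqnorm u = dotv u u.
Proof. by rewrite /sqnorm big_ord1; apply: eq_bigr => k _; rewrite expr2. Qed.

Lemma sqnorm_ge0 p q (A : 'M[R]_(p, q)) : 0 <= sqnorm A.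
Proof. by apply: sumr_ge0 => i _; apply: sumr_ge0 => j _; apply: sqr_ge0. Qed.

Lemma sqnormD d (u v : 'rV[R]_d) :
  sqnorm (u + v) = sqnorm u + 2 * dotv u v + sqnorm v.
Proof. rewrite !sqnormE !dotvDl !dotvDr (dotvC v u); ring. Qed.

Lemma sqnormZ d c (u : 'rV[R]_d) : sqnorm (c *: u) = c ^+ 2 * sqnorm u.
Proof. by rewrite !sqnormE dotvZl dotvZr mulrA expr2. Qed.

Lemma sqnormN d (u : 'rV[R]_d) : sqnorm (- u) = sqnorm u.
Proof. by rewrite -scaleN1r sqnormZ sqrrN expr1n mul1r. Qed.

Lemma sqnormB d (u v : 'rV[R]_d) :
  sqnorm (u - v) = sqnorm u - 2 * dotv u v + sqnorm v.
Proof. by rewrite sqnormD sqnormN dotvC dotvNl dotvC; ring. Qed.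

Lemma dot_le d (u v : 'rV[R]_d) : 2 * dotv u v <= sqnorm u + sqnorm v.
Proof.
have := sqnorm_ge0 (u - v); rewrite sqnormB; lra.
Qed.

Lemma sqnormD_le d (u v : 'rV[R]_d) :
  sqnorm (u + v) <= 2 * sqnorm u + 2 * sqnorm v.
Proof. have := dot_le u v; rewrite sqnormD; lra. Qed.

Lemma jensen d k (a : 'I_k -> 'rV[R]_d) :
  sqnorm (\sum_(i < k) a i) <= k%:R * \sum_(i < k) sqnorm (a i).
Proof.
rewrite sqnormE dotv_suml.
under eq_bigr => i _ do rewrite dotvC dotv_suml.
apply: (@le_trans _ _ (\sum_(i < k) \sum_(j < k) (sqnorm (a i) + sqnorm (a j)) / 2)).
  apply: ler_sum => i _; apply: ler_sum => j _.
  have := dot_le (a j) (a i); lra.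
under eq_bigr => i _ do rewrite -mulr_suml big_split /= sumr_const card_ord.
rewrite -mulr_suml big_split /= sumr_const card_ord -sumrMnl.
set S := \sum_(i < k) _.
rewrite -mulr2n -[_ *+ 2]mulr_natr mulfK ?pnatr_eq0 // /S.
by rewrite mulr_natl ?sumrMnl.
Qed.


Lemma sqnorm_rows p d (M : 'M[R]_(p, d)) : sqnorm M = \sum_(i < p) sqnorm (row i M).
Proof.
apply: eq_bigr => i _; rewrite /sqnorm big_ord1; apply: eq_bigr => j _.
by rewrite mxE.
Qed.

Lemma dotv_delta d (u : 'rV[R]_d) k : dotv u (delta_mx 0 k) = u 0 k.
Proof.
rewrite /dotv (bigD1 k) //= big1 ?addr0; first by rewrite mxE !eqxx mulr1.
by move=> j /negbTE jk; rewrite mxE jk andbF mulr0.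
Qed.

Lemma dotv_inj d (u v : 'rV[R]_d) : (forall w, dotv u w = dotv v w) -> u = v.
Proof.
move=> H; apply/matrixP => i k; rewrite (ord1 i) -!dotv_delta; exact: H.
Qed.


Lemma grad_lin d k (fs : 'I_k -> 'rV[R]_d -> R) gs (F : 'rV[R]_d -> R) G (c : R) :
  (forall j, is_gradient (fs j) (gs j)) -> is_gradient F G ->
  (forall x, F x = c * \sum_(j < k) fs j x) ->
  forall x, G x = c *: \sum_(j < k) gs j x.
Proof.
move=> Hfs HG HF x; apply: dotv_inj => w.
have [dF HFx] := HG x.
rewrite -HFx -deriveE //.
have -> : F = c \*: \sum_(j < k) fs j.
  by apply/funext => y; rewrite HF /= fct_sumE.
have dj : forall j, derivable (fs j) x w.
  by move=> j; apply: diff_derivable; case: (Hfs j x).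
rewrite deriveZ; last exact: derivable_sum.
rewrite derive_sum // dotvZl dotv_suml; congr (_ * _).
apply: eq_bigr => j _; have [dj' <-] := Hfs j x; exact: deriveE.
Qed.


Lemma line_derive d (F : 'rV[R]_d -> R) G x v (s : R) : is_gradient F G ->
  is_derive s 1 (fun s : R => F (x + s *: v)) (dotv (G (x + s *: v)) v).
Proof.
move=> HG.
have key : (fun h : R => h^-1 *: (((fun s : R => F (x + s *: v)) \o shift s) (h *: 1)
     - F (x + s *: v))) =
   (fun h : R => h^-1 *: ((F \o shift (x + s *: v)) (h *: v) - F (x + s *: v))).
  apply/funext => h /=; congr (_ *: (F _ - _)).
  by rewrite [h *: 1]mulr1 scalerDl addrCA addrC.
have [dF HF] := HG (x + s *: v).
split.
  by rewrite /derivable key; apply: diff_derivable.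
by rewrite /derive key -/(derive F (x + s *: v) v) deriveE.
Qed.


Lemma descent d (F : 'rV[R]_d -> R) G (L : R) : 0 < L -> is_gradient F G ->
  (forall x x', sqnorm (G x - G x') <= L ^+ 2 * sqnorm (x - x')) ->
  forall x y, F y <= F x + dotv (G x) (y - x) + L / 2 * sqnorm (y - x).
Proof.
move=> L0 HG HL x y.
set v := y - x; set c := dotv (G x) v; set N := sqnorm v.
pose phi := fun s : R => F (x + s *: v).
pose psi := (phi - c \*: id) - (L / 2 * N) \*: (@id R * @id R).
have dpsi : forall s : R, is_derive s 1 psi
   ((dotv (G (x + s *: v)) v - c *: 1) - (L / 2 * N) *: (s *: 1 + s *: 1)).
  move=> s; have := line_derive x v s HG => dphi.
  exact: is_deriveB.
have dv : forall s : R, derivable psi s 1 by move=> s; have [] := dpsi s.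
have := @ler0_derive1_nincr R psi 0 1 (fun s _ => dv s) _
  (derivable_within_continuous (fun s _ => dv s)) 0 1 (lexx _) ler01 (lexx _).
have psiE : forall s, psi s = F (x + s *: v) - c * s - L / 2 * N * (s * s).
  by move=> s.
have -> : psi 1 = F y - c - L / 2 * N.
  by rewrite psiE scale1r /v (addrC x) subrK !mulr1.
have -> : psi 0 = F x.
  by rewrite psiE scale0r addr0 !mulr0 !subr0.
move=> H; suff : forall s, s \in `]0, 1[ -> derive1 psi s <= 0.
  by move/H; lra.
move=> s s01; rewrite derive1E derive_val.
change (dotv (G (x + s *: v)) v - c * 1 - (L / 2 * N) * (s * 1 + s * 1) <= 0).
have s0 : 0 < s by move: s01; rewrite in_itv /= => /andP[].
have Ha : sqnorm (G (x + s *: v) - G x) <= L ^+ 2 * (s ^+ 2 * N).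
  by have := HL (x + s *: v) x; rewrite (addrC x) addrK sqnormZ.
have Hd := dot_le (G (x + s *: v) - G x) ((L * s) *: v).
rewrite dotvZr sqnormZ dotvBl -/c -/N in Hd.
set P := dotv (G (x + s *: v)) v in Hd *.
set A := sqnorm (G (x + s *: v) - G x) in Ha Hd.
have LS : 0 < L * s by apply: mulr_gt0.
have HN : 0 <= N by apply: sqnorm_ge0.
have : (L * s) * (P - c) <= (L * s) * (L * s * N) by nra.
rewrite ler_pM2l //; nra.
Qed.

Lemma avg_le d k (w : 'I_k -> 'rV[R]_d) : (0 < k)%N ->
  sqnorm (k%:R^-1 *: \sum_(i < k) w i) <= k%:R^-1 * \sum_(i < k) sqnorm (w i).
Proof.
move=> k0; rewrite sqnormZ.
have kp : 0 < k%:R :> R by rewrite ltr0n.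
apply: (le_trans (ler_wpM2l _ (jensen w))); first by rewrite sqr_ge0.
by rewrite expr2 -mulrA (mulrA _ k%:R) mulVf ?mul1r // gt_eqF.
Qed.

Lemma lip_avg d k (h : 'I_k -> 'rV[R]_d -> 'rV[R]_d) (H : 'rV[R]_d -> 'rV[R]_d) (L : R) :
  (0 < k)%N -> (forall x, H x = k%:R^-1 *: \sum_(j < k) h j x) ->
  (forall x x', k%:R^-1 * \sum_(j < k) sqnorm (h j x - h j x') <= L ^+ 2 * sqnorm (x - x')) ->
  forall x x', sqnorm (H x - H x') <= L ^+ 2 * sqnorm (x - x').
Proof.
move=> k0 HH Hl x x'; rewrite !HH -scalerBr -sumrB.
exact: le_trans (avg_le _ k0) (Hl x x').
Qed.

Lemma sum_rows p d (M : 'M[R]_(p, d)) : \sum_(i < p) row i M = const_mx 1 *m M.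
Proof.
apply/matrixP => a b; rewrite summxE !mxE; apply: eq_bigr => i _.
by rewrite !mxE mul1r.
Qed.

Lemma onesW p (adj : rel 'I_p) (W : 'M[R]_p) : gossip adj W ->
  (const_mx 1 : 'rV[R]_p) *m W = const_mx 1.
Proof.
case=> WT _ W1; apply: trmx_inj; rewrite trmx_mul WT !trmx_const; exact: W1.
Qed.

Lemma fastmix_mean p d (adj : rel 'I_p) (W : 'M[R]_p) e (u : 'M[R]_(p, d)) k :
  gossip adj W ->
  (const_mx 1 : 'rV[R]_p) *m (fastmix_pair W e u k).1 = (const_mx 1 : 'rV[R]_p) *m u /\
  (const_mx 1 : 'rV[R]_p) *m (fastmix_pair W e u k).2 = (const_mx 1 : 'rV[R]_p) *m u.
Proof.
move=> HW; elim: k => [|k [IH1 IH2]] //=; split => //.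
by rewrite mulmxBr !scalemxAr mulmxA (onesW HW) -!scalemxAr IH1 IH2 -scalerBl addrK scale1r.
Qed.

Lemma FastMix_mean p d (adj : rel 'I_p) (W : 'M[R]_p) l2 (u : 'M[R]_(p, d)) k :
  gossip adj W -> (const_mx 1 : 'rV[R]_p) *m FastMix W l2 u k = (const_mx 1 : 'rV[R]_p) *m u.
Proof. by move=> HW; case: (fastmix_mean (eta_u_of l2) u k HW). Qed.

Lemma dearest_s m n d b (adj : rel 'I_m) (W : 'M[R]_m) l2 gij gi (xbar0 : 'rV[R]_d) eta
  Kin K Khat y (xi : nat -> 'I_m -> 'I_b -> 'I_n) : gossip adj W -> forall t,
  (const_mx 1 : 'rV[R]_m) *m (dearest W l2 gij gi xbar0 eta Kin K Khat y xi t).2 =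
  (const_mx 1 : 'rV[R]_m) *m (dearest W l2 gij gi xbar0 eta Kin K Khat y xi t).1.2.
Proof.
move=> HW; elim=> [|t IH] /=; first exact: FastMix_mean HW.
case E: (dearest W l2 gij gi xbar0 eta Kin K Khat y xi t) IH => [[xt gt] st] /= IH.
by rewrite (FastMix_mean _ _ _ HW) !mulmxDr mulmxN IH addrC addrA addNr add0r.
Qed.

Lemma dearest_x m n d b (adj : rel 'I_m) (W : 'M[R]_m) l2 gij gi (xbar0 : 'rV[R]_d) eta
  Kin K Khat y (xi : nat -> 'I_m -> 'I_b -> 'I_n) : gossip adj W -> forall t,
  (const_mx 1 : 'rV[R]_m) *m (dearest W l2 gij gi xbar0 eta Kin K Khat y xi t.+1).1.1 =
  (const_mx 1 : 'rV[R]_m) *m (dearest W l2 gij gi xbar0 eta Kin K Khat y xi t).1.1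
  - eta *: ((const_mx 1 : 'rV[R]_m) *m (dearest W l2 gij gi xbar0 eta Kin K Khat y xi t).1.2).
Proof.
move=> HW t; have := dearest_s l2 gij gi xbar0 eta Kin K Khat y xi HW t.
rewrite [dearest _ _ _ _ _ _ _ _ _ _ _ t.+1]/=.
case E: (dearest W l2 gij gi xbar0 eta Kin K Khat y xi t) => [[xt gt] st] /= Hs.
by rewrite (FastMix_mean _ _ _ HW) mulmxBr -scalemxAr Hs.
Qed.


Lemma row_sub_ones p d (x : 'M[R]_(p, d)) (v : 'rV[R]_d) i :
  row i (x - ones_row p v) = row i x - v.
Proof.
apply/matrixP => a b; rewrite (ord1 a) !mxE big_ord1 !mxE mul1r //.
Qed.

End Aux.
Unset Implicit Arguments.

Theorem lemma5 (R : realType) (m n d : nat) (hm : (0 < m)%N) (hn : (0 < n)%N)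
  (fij : 'I_m -> 'I_n -> 'rV[R]_d -> R)
  (gij : 'I_m -> 'I_n -> 'rV[R]_d -> 'rV[R]_d)
  (gi : 'I_m -> 'rV[R]_d -> 'rV[R]_d) (gF : 'rV[R]_d -> 'rV[R]_d)
  (Hgij : forall i j, is_gradient (fij i j) (gij i j))
  (Hgi : forall i, is_gradient (f_loc fij i) (gi i))
  (HgF : is_gradient (f_glob fij) gF)
  (L : R) (hL : 0 < L) (Hsmooth : avg_smooth L gij)
  (adj : rel 'I_m) (W : 'M[R]_m) (HW : gossip adj W)
  (l2 : R) (Hl2 : is_lambda2 W l2)
  (xbar0 : 'rV[R]_d) (eta : R) (heta : 0 < eta) (b : nat) (hb : (0 < b)%N)
  (Kin K Khat T : nat)
  (y : nat -> bool) (xi : nat -> 'I_m -> 'I_b -> 'I_n) (t : nat) (ht : (t < T)%N) :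
  let st := dearest W l2 gij gi xbar0 eta Kin K Khat y xi in
  let x_ := fun t => (st t).1.1 in
  let g_ := fun t => (st t).1.2 in
  let s_ := fun t => (st t).2 in
  let xb := fun t => mean (x_ t) in
  let sb := fun t => mean (s_ t) in
  let U := sqnorm (m%:R^-1 *: \sum_(i < m) (row i (g_ t) - gi i (row i (x_ t)))) in
  let C := sqnorm (x_ t - ones_row m (xb t)) + eta ^+ 2 * sqnorm (s_ t - ones_row m (sb t)) in
  f_glob fij (xb t.+1) <=
    f_glob fij (xb t) - eta / 2 * sqnorm (gF (xb t)) + eta * U
    + L ^+ 2 * eta / m%:R * C
    - ((2 * eta)^-1 - L / 2) * sqnorm (xb t.+1 - xb t).
Proof.
cbv beta zeta.
set X1 := (dearest W l2 gij gi xbar0 eta Kin K Khat y xi t.+1).1.1.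
set X0 := (dearest W l2 gij gi xbar0 eta Kin K Khat y xi t).1.1.
set Gt := (dearest W l2 gij gi xbar0 eta Kin K Khat y xi t).1.2.
set St := (dearest W l2 gij gi xbar0 eta Kin K Khat y xi t).2.
set xb1 := mean X1.
set xb0 := mean X0.
set U := sqnorm (m%:R^-1 *: _).
have mp : 0 < m%:R :> R by rewrite ltr0n.
have gi_eq : forall i x, gi i x = n%:R^-1 *: \sum_(j < n) gij i j x.
  by move=> i; apply: grad_lin (Hgij i) (Hgi i) _.
have gF_eq : forall x, gF x = m%:R^-1 *: \sum_(i < m) gi i x.
  by apply: grad_lin Hgi HgF _.
have lip_gi : forall i x x', sqnorm (gi i x - gi i x') <= L ^+ 2 * sqnorm (x - x').
  by move=> i; apply: lip_avg hn (gi_eq i) (Hsmooth i).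
have lip_gF : forall x x', sqnorm (gF x - gF x') <= L ^+ 2 * sqnorm (x - x').
  apply: lip_avg hm gF_eq _ => x x'.
  apply: (le_trans (ler_wpM2l _ (ler_sum _ (fun i _ => lip_gi i x x')))).
    by rewrite invr_ge0 ltW.
  by rewrite sumr_const card_ord -[(L ^+ 2 * _) *+ m]mulr_natl mulKf // gt_eqF.
have desc := descent hL HgF lip_gF xb0 xb1.
set gb := m%:R^-1 *: \sum_(i < m) row i Gt.
have HD : xb1 - xb0 = - eta *: gb.
  rewrite /xb1 /xb0 /mean !sum_rows /X1 (dearest_x l2 gij gi xbar0 eta Kin K Khat y xi HW t).
  rewrite -/X0 -/Gt /gb sum_rows scalerBr addrAC subrr add0r !scalerA mulrC -scaleNr.
  by rewrite mulNr.
rewrite HD in desc *.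
set a := gF xb0 in desc *.
set A := m%:R^-1 *: \sum_(i < m) (gi i xb0 - gi i (row i X0)).
set B := m%:R^-1 *: \sum_(i < m) (gi i (row i X0) - row i Gt).
have HAB : a - gb = A + B.
  rewrite /a gF_eq /A /B /gb -!scalerBr -scalerDr -!sumrB -big_split /=.
  by congr (_ *: _); apply: eq_bigr => i _; rewrite addrA subrK.
have HB : sqnorm B = U.
  by rewrite /B /U -sqnormN -scalerN -sumrN; congr (sqnorm (_ *: _));
    apply: eq_bigr => i _; rewrite opprB.
set Cx := sqnorm (X0 - ones_row m xb0).
have HA : sqnorm A <= L ^+ 2 * m%:R^-1 * Cx.
  apply: (le_trans (avg_le _ hm)).
  rewrite /Cx sqnorm_rows [L ^+ 2 * _]mulrC -mulrA.
  apply: ler_wpM2l; first by rewrite invr_ge0 ltW.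
  rewrite mulr_sumr; apply: ler_sum => i _.
  by rewrite row_sub_ones -opprB sqnormN; apply: lip_gi.
have HE : sqnorm (a - gb) <= 2 * U + 2 * (L ^+ 2 * m%:R^-1 * Cx).
  by rewrite HAB -HB; apply: (le_trans (sqnormD_le _ _)); lra.
rewrite sqnormB in HE.
rewrite dotvZr sqnormZ in desc.
rewrite sqnormZ.
set Cs := sqnorm (St - ones_row m (mean St)).
have HCs : 0 <= Cs by apply: sqnorm_ge0.
set P := dotv a gb in HE desc *.
set A2 := sqnorm a in HE desc *.
set G := sqnorm gb in HE desc *.
set M := L ^+ 2 * m%:R^-1 in HE HA *.
have -> : L ^+ 2 * eta / m%:R = eta * M by rewrite /M mulrAC mulrC.
have e2 : ((2 * eta)^-1 - L / 2) * ((- eta) ^+ 2 * G) = eta / 2 * G - L / 2 * eta ^+ 2 * G.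
  by rewrite sqrrN; field; rewrite gt_eqF.
have h1 : 0 <= eta * (2 * U + 2 * (M * Cx) - (A2 - 2 * P + G)).
  by apply: mulr_ge0; [apply: ltW|lra].
have HM : 0 <= M by rewrite /M mulr_ge0 ?sqr_ge0 // invr_ge0 ltW.
have h2 : 0 <= eta * M * (eta ^+ 2 * Cs) by rewrite !mulr_ge0 ?sqr_ge0 // ltW.
rewrite e2; move: desc; rewrite sqrrN; lra.
Qed.
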